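(* Let $k,\ell \in \mathbb{N}$, and let $G$ be an $\ell$-empty ordered graph. If the irreducible block decomposition of $G$ contains a block of order at least $4k\ell$, then $S_n(G) \geqslant F_{n,\ell}$ for each $n \leqslant k$.
   Context: Ordered graphs of order $n$ have vertex set $[n]$ with the natural order. The length of an edge $ij$ is $|i-j|$; $G$ is $\ell$-empty if it has no edges of length at least $\ell$. A pair of vertices $u<v$ separates the edges of $G$ if every edge $ij$ ($i<j$) has $j\leqslant u$ or $v\leqslant i$; $G$ is irreducible if no pair separates its edges. For ordered graphs $G_1,\dots,G_m$, $G_1+\dots+G_m$ places copies of them consecutively from left to right with no edges between copies. Every ordered graph $G$ is uniquely $G=G_1+\dots+G_m$ with each $G_i$ irreducible; this is its irreducible block decomposition. $S_n(G)$ is the number of distinct (non-isomorphic as ordered graphs) induced ordered subgraphs of $G$ of order $n$. $F_{n,\ell}$: $F_{n,\ell}=0$ for $n<0$, $F_{0,\ell}=1$, $F_{n,\ell}=F_{n-1,\ell}+\dots+F_{n-\ell,\ell}$ for $n\geqslant1$. *)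

(* Defs.v *)
From mathcomp Require Import all_boot.
Set Implicit Arguments. Unset Strict Implicit. Unset Printing Implicit Defensive.

(* An ordered graph of order N: vertex set {0,...,N-1} (0-based instead of
   the paper's [N] = {1,...,N}; only the order matters), natural order,
   given by a symmetric irreflexive adjacency relation E on nat supported
   on vertices < N. *)
Definition ordered_graph (N : nat) (E : rel nat) : Prop :=
  [/\ forall i j, E i j = E j i,
      forall i, ~~ E i i &
      forall i j, E i j -> i < N].

Definition l_empty (l : nat) (E : rel nat) : Prop :=
  forall i j, E i j -> i < j -> j - i < l.

(* The induced ordered subgraph on A (|A| = n), relabelled increasingly as
   {0,...,n-1}; recorded as its adjacency on 'I_n.  Two ordered graphs of
   order n are isomorphic (as ordered graphs) iff these adjacencies agree,
   since the only order-preserving bijection [n] -> [n] is the identity. *)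
Definition induced (N : nat) (E : rel nat) (n : nat) (A : {set 'I_N})
  : {ffun 'I_n * 'I_n -> bool} :=
  let s := sort leq [seq val x | x <- enum A] in
  [ffun p : 'I_n * 'I_n => E (nth 0 s p.1) (nth 0 s p.2)].

Definition S_n (n N : nat) (E : rel nat) : nat :=
  #|[set induced E n A | A : {set 'I_N} & #|A| == n]|.

Definition irreducible (m : nat) (Eb : rel nat) : Prop :=
  ~ (exists u v, [/\ u < v, v < m &
       forall i j, i < j -> Eb i j -> (j <= u) || (v <= i)]).

Definition block (E : rel nat) (a m : nat) : rel nat :=
  fun i j => [&& i < m, j < m & E (a + i) (a + j)].

Definition block_start (ns : seq nat) (t : nat) : nat := sumn (take t ns).

(* ns is (the list of orders of) the irreducible block decomposition
   G = G_1 + ... + G_m of the ordered graph (N, E): blocks are consecutive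
   intervals of positive orders ns`_0, ..., covering {0..N-1}, there are
   no edges between different blocks, and each block is irreducible. *)
Definition irr_block_decomp (N : nat) (E : rel nat) (ns : seq nat) : Prop :=
  [/\ all (fun m => 0 < m) ns,
      sumn ns = N,
      (forall i j, E i j -> exists2 t, t < size ns &
          [/\ block_start ns t <= i, i < block_start ns t + nth 0 ns t,
              block_start ns t <= j & j < block_start ns t + nth 0 ns t]) &
      (forall t, t < size ns ->
          irreducible (nth 0 ns t) (block E (block_start ns t) (nth 0 ns t)))].

(* F_{n,l}: F_{n,l} = 0 for n < 0, F_{0,l} = 1,
   F_{n,l} = F_{n-1,l} + ... + F_{n-l,l} for n >= 1.
   Fseq l n = [:: F_{n,l}; F_{n-1,l}; ...; F_{0,l}]. *)
Fixpoint Fseq (l n : nat) : seq nat :=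
  match n with
  | 0 => [:: 1]
  | n'.+1 => let s := Fseq l n' in sumn (take l s) :: s
  end.

Definition F (n l : nat) : nat := head 0 (Fseq l n).

(* Main.v *)
Require Import Defs.
From mathcomp Require Import all_boot zify.
From Stdlib Require Import Classical.
Set Implicit Arguments. Unset Strict Implicit. Unset Printing Implicit Defensive.



Fixpoint CS (l n : nat) : seq (seq (seq nat)) :=
  match n with
  | 0 => [:: [:: [::]]]
  | n'.+1 => let s := CS l n' in
      [seq b.+1 :: c | b <- iota 0 l, c <- nth [::] s b] :: s
  end.

Definition comps l n := head [::] (CS l n).

Lemma sumn_take_iota (s : seq nat) l :
  sumn (take l s) = sumn [seq nth 0 s b | b <- iota 0 l].
Proof.
elim: s l => [|x s IH] [|l] //=.
- rewrite add0n; elim: (iota 1 l) => //= ? ? <-; by rewrite nth_nil.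
- by rewrite IH -(addn0 1) iotaDl -map_comp.
Qed.

Lemma Fseq_CS l n : map size (CS l n) = Fseq l n.
Proof.
elim: n => //= n IH; rewrite IH size_allpairs_dep -IH sumn_take_iota.
congr (_ :: _); congr sumn; apply: eq_map => b.
case: (ltnP b (size (CS l n))) => hb; first by rewrite (nth_map [::]).
by rewrite !nth_default ?size_map.
Qed.

Lemma F_comps l n : F n l = size (comps l n).
Proof. by rewrite /F -Fseq_CS /comps; case: n. Qed.

Lemma CS_prop l n b c : c \in nth [::] (CS l n) b ->
  sumn c + b = n /\ all (fun a => 0 < a <= l) c.
Proof.
elim: n b c => [|n IH] [|b] c /=.
- by rewrite inE => /eqP ->.
- by rewrite nth_nil.
- case/allpairsPdep => [b' [c' [Hb Hc ->]]].
  have [H1 H2] := IH _ _ Hc; rewrite mem_iota in Hb.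
  by split; [rewrite /= -H1; lia | rewrite /= H2 andbT; lia].
- by move=> /IH [H1 H2]; split => //; lia.
Qed.

Lemma CS_uniq l n b : uniq (nth [::] (CS l n) b).
Proof.
elim: n b => [|n IH] [|b] //=; first by rewrite nth_nil.
apply: allpairs_uniq_dep; first exact: iota_uniq.
  by move=> x _; apply: IH.
move=> [x1 y1] [x2 y2] _ _ /= [-> ->] //.
Qed.



Fixpoint pref (c : seq nat) : seq nat :=
  if c is a :: c' then a :: map (addn a) (pref c') else [::].

Lemma pref_inj : injective pref.
Proof.
elim=> [|a c IH] [|a' c'] //= [Ha Hm]; subst a'.
by rewrite (IH c') // (inj_map (@addnI a) Hm).
Qed.

Lemma pref_mem c z : all (fun a => 0 < a) c -> z \in pref c -> 0 < z <= sumn c.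
Proof.
elim: c z => [|a c IH] z //= /andP [Ha Hc].
rewrite inE => /orP [/eqP -> | /mapP [y Hy ->]]; first by lia.
by have := IH _ Hc Hy; lia.
Qed.

Lemma pref_last c : c != [::] -> sumn c \in pref c.
Proof.
elim: c => [|a c IH] // _; case: c IH => [|b c] IH; first by rewrite /= addn0 inE.
change (a + sumn (b::c) \in a :: map (addn a) (pref (b::c))).
by rewrite inE (map_f (addn a) (IH isT)) orbT.
Qed.

Lemma pref_sorted c : all (fun a => 0 < a) c -> sorted ltn (pref c).
Proof.
rewrite (sorted_pairwise ltn_trans).
elim: c => [|a c IH] //= /andP [Ha Hc].
rewrite pairwise_map.
have -> : pairwise (relpre (addn a) ltn) (pref c) = pairwise ltn (pref c).
  by apply: eq_pairwise => x y /=; rewrite ltn_add2l.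
rewrite IH // andbT; apply/allP => z /mapP [y Hy ->].
by have := pref_mem Hc Hy; lia.
Qed.

Lemma pref_eq n c c' : all (fun a => 0 < a) c -> all (fun a => 0 < a) c' ->
  sumn c = n -> sumn c' = n ->
  (forall p, 0 < p < n -> (p \in pref c) = (p \in pref c')) -> c = c'.
Proof.
move=> Hc Hc' Hs Hs' H; apply: pref_inj.
apply: (irr_sorted_eq ltn_trans ltnn (pref_sorted Hc) (pref_sorted Hc')) => z.
case: (boolP (0 < z < n)) => Hz; first exact: H.
case: (boolP (z == n)) => [/eqP Hzn | Hzn].
  case: (posnP n) => Hn.
    apply/idP/idP => Hm.
      by have := pref_mem Hc Hm; lia.
    by have := pref_mem Hc' Hm; lia.
  have Hc0 : c != [::] by case: (c) Hs => //= Heq; lia.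
  have Hc0' : c' != [::] by case: (c') Hs' => //= Heq; lia.
  by rewrite Hzn -{1}Hs -Hs' !pref_last.
apply/idP/idP => Hm.
  by have := pref_mem Hc Hm; lia.
by have := pref_mem Hc' Hm; lia.
Qed.



Definition irrV (E : rel nat) (S : seq nat) : Prop :=
  forall u, (exists s, s \in S /\ s <= u) -> (exists w, w \in S /\ u < w) ->
  exists x y, [/\ x \in S, y \in S, x <= u, u < y & E x y].

Definition crossP (E : rel nat) (s : seq nat) (p : nat) : Prop :=
  exists i j, [/\ i < p, p <= j, j < size s & E (nth 0 s i) (nth 0 s j)].

Definition vspec (E : rel nat) (l p a : nat) (S : seq nat) (lo hi : nat) : Prop :=
  [/\ uniq S /\ size S = a, lo \in S /\ hi \in S,
      (forall z, z \in S -> lo <= z <= hi), irrV E S &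
      (p < lo + l /\ lo <= p <= hi /\ hi + 2 <= lo + a + l)].

Lemma vstep (E : rel nat) l a0 M p a S lo hi :
  (forall x y, E x y -> x < y -> y - x < l) ->
  (forall u, u.+1 < M -> exists i j, [/\ i <= u, u < j, j < M & E (a0 + i) (a0 + j)]) ->
  a0 <= p -> p + a + l <= a0 + M -> 0 < a ->
  vspec E l p a S lo hi -> exists S' lo' hi', vspec E l p a.+1 S' lo' hi'.
Proof.
move=> Hle Hirr Hp Hroom Ha [[HU HS] [Hlo Hhi] Hrange HirrS [B1 [B2 B3]]].
have [i [j [Hiu Huj HjM HE]]] := Hirr (hi - a0) ltac:(lia).
have Hl := Hle _ _ HE ltac:(lia).
case: (classic (exists z, lo < z < hi /\ z \notin S)) => [[z [Hz Hzn]] | Hfull].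
  exists (z :: S), lo, hi; split.
  - by rewrite /= Hzn HU HS.
  - by rewrite !inE Hlo Hhi !orbT.
  - by move=> z'; rewrite inE => /orP [/eqP -> | /Hrange]; lia.
  - move=> u [s [Hs Hsu]] [w [Hw Huw]].
    have Hlu : lo <= u.
      by move: Hs; rewrite inE => /orP [/eqP Hs | /Hrange]; lia.
    have Huh : u < hi.
      by move: Hw; rewrite inE => /orP [/eqP Hw | /Hrange]; lia.
    have [x [y [Hx Hy Hxu Huy Exy]]] := HirrS u (ex_intro _ lo (conj Hlo Hlu))
                                          (ex_intro _ hi (conj Hhi Huh)).
    by exists x, y; split => //; rewrite inE ?Hx ?Hy orbT.
  - lia.
have Hin : forall z, lo <= z <= hi -> z \in S.
  move=> z Hz; case: (boolP (z \in S)) => // Hn; exfalso.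
  have [Ez|Nz] := eqVneq z lo; first by rewrite Ez Hlo in Hn.
  have [Ez'|Nz'] := eqVneq z hi; first by rewrite Ez' Hhi in Hn.
  by apply: Hfull; exists z; split => //; lia.
have Hsize : hi.+1 - lo <= a.
  rewrite -HS -(size_iota lo (hi.+1 - lo)); apply: uniq_leq_size; first exact: iota_uniq.
  by move=> z; rewrite mem_iota => Hz; apply: Hin; lia.
have HyS : (a0 + j) \notin S by apply/negP => /Hrange; lia.
case: (leqP lo (a0 + i)) => Hlox.
  have HxS : (a0 + i) \in S by apply: Hin; lia.
  exists (a0 + j :: S), lo, (a0 + j); split.
  - by rewrite /= HyS HU HS.
  - by rewrite !inE Hlo eqxx !orbT.
  - by move=> z'; rewrite inE => /orP [/eqP -> | /Hrange]; lia.
  - move=> u [s [Hs Hsu]] [w [Hw Huw]].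
    case: (ltnP u hi) => Hu.
      have Hs' : s \in S by move: Hs; rewrite inE => /orP [/eqP Hs | //]; lia.
      have [x [y [Hx Hy Hxu Huy Exy]]] := HirrS u (ex_intro _ s (conj Hs' Hsu))
                                          (ex_intro _ hi (conj Hhi Hu)).
      by exists x, y; split => //; rewrite inE ?Hx ?Hy orbT.
    have Hw' : u < a0 + j by move: Hw; rewrite inE => /orP [/eqP Hw | /Hrange]; lia.
    exists (a0 + i), (a0 + j); split => //; last lia.
    + by rewrite inE HxS orbT.
    + by rewrite inE eqxx.
  - lia.
have HxS : (a0 + i) \notin S by apply/negP => /Hrange; lia.
exists [:: a0 + i, a0 + j & rem lo S], (a0 + i), (a0 + j); split.
- split; last by rewrite /= size_rem // HS; lia.
  rewrite /= rem_uniq // andbT !inE negb_or.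
  have -> : (a0 + i != a0 + j) by apply/eqP; lia.
  have -> : (a0 + i \notin rem lo S) by apply/negP => /mem_rem; apply/negP.
  by apply/negP => /mem_rem; apply/negP.
- by rewrite !inE !eqxx !orbT.
- move=> z; rewrite !inE => /or3P [/eqP -> | /eqP -> | /mem_rem /Hrange]; lia.
- move=> u [s [Hs Hsu]] [w [Hw Huw]].
  exists (a0 + i), (a0 + j); split => //.
  + by rewrite inE eqxx.
  + by rewrite !inE eqxx orbT.
  + by move: Hs; rewrite !inE => /or3P [/eqP Hs | /eqP Hs | /mem_rem /Hrange]; lia.
  + by move: Hw; rewrite !inE => /or3P [/eqP Hw | /eqP Hw | /mem_rem /Hrange]; lia.
- lia.
Qed.



Lemma piece_val (E : rel nat) l a0 M p :
  (forall x y, E x y -> x < y -> y - x < l) ->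
  (forall u, u.+1 < M -> exists i j, [/\ i <= u, u < j, j < M & E (a0 + i) (a0 + j)]) ->
  a0 <= p -> p + l + l <= a0 + M ->
  forall a, 0 < a <= l -> exists S lo hi, vspec E l p a S lo hi.
Proof.
move=> Hle Hirr Hp Hroom; elim=> [//|a IH] Ha.
case: (posnP a) => Ha0.
  subst a; exists [:: p], p, p; split => //.
  - by rewrite inE eqxx.
  - by move=> z; rewrite inE => /eqP ->; rewrite leqnn.
  - by move=> u [s [Hs Hsu]] [w [Hw Huw]]; move: Hs Hw; rewrite !inE => /eqP Hs /eqP Hw; lia.
  - lia.
have [S [lo [hi H]]] := IH ltac:(lia).
apply: (vstep Hle Hirr Hp _ Ha0 H); lia.
Qed.

Lemma irrV_eq E S S' : S =i S' -> irrV E S -> irrV E S'.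
Proof.
move=> eqS H u [s [Hs Hsu]] [w [Hw Huw]].
rewrite -eqS in Hs; rewrite -eqS in Hw.
have [x [y [Hx Hy Hxu Huy Exy]]] := H u (ex_intro _ s (conj Hs Hsu)) (ex_intro _ w (conj Hw Huw)).
by exists x, y; split; rewrite -?eqS.
Qed.

Lemma irrV_cross E P : sorted ltn P -> irrV E P ->
  forall q, 0 < q < size P -> crossP E P q.
Proof.
move=> Hs H [//|q] Hq.
have Huniq : uniq P by move: Hs; rewrite ltn_sorted_uniq_leq => /andP [].
have Hsl : sorted leq P by move: Hs; rewrite ltn_sorted_uniq_leq => /andP [].
have Hq' : q.+1 < size P by case/andP: Hq.
have Hu : nth 0 P q \in P by apply: mem_nth; apply: ltnW.
have Hw : nth 0 P q.+1 \in P by apply: mem_nth.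
have Huw : nth 0 P q < nth 0 P q.+1.
  by apply: (sorted_ltn_nth ltn_trans 0 Hs); rewrite ?inE /= ?(ltnW Hq').
have Hiu : index (nth 0 P q) P = q by rewrite index_uniq // ltnW.
move: Hu Hw Huw Hiu; set u := nth 0 P q; set w := nth 0 P q.+1; clearbody u w => Hu Hw Huw Hiu.
have [x [y [Hx Hy Hxu Huy Exy]]] := H u (ex_intro _ u (conj Hu (leqnn u))) (ex_intro _ w (conj Hw Huw)).
exists (index x P), (index y P); split.
- case: (ltnP (index x P) q.+1) => // Hc; exfalso.
  have : u < x by apply: (sorted_ltn_index ltn_trans Hs) => //; lia.
  lia.
- case: (ltnP (index y P) q.+1) => // Hc; exfalso.
  have : y <= u by apply: (sorted_leq_index leq_trans leqnn Hsl) => //; lia.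
  lia.
- by rewrite index_mem.
- by rewrite !nth_index.
Qed.

Definition pspec (E : rel nat) (l lb a : nat) (P : seq nat) : Prop :=
  [/\ sorted ltn P, size P = a,
      (forall x, x \in P -> lb < x /\ x + 2 <= lb + 3 * l) &
      (forall q, 0 < q < size P -> crossP E P q)].

Lemma piece (E : rel nat) l a0 M lb :
  (forall x y, E x y -> x < y -> y - x < l) ->
  (forall u, u.+1 < M -> exists i j, [/\ i <= u, u < j, j < M & E (a0 + i) (a0 + j)]) ->
  a0 <= lb -> lb + 3 * l <= a0 + M ->
  forall a, 0 < a <= l -> exists P, pspec E l lb a P.
Proof.
move=> Hle Hirr H1 H2 a Ha.
have [S [lo [hi [[HU HS] [Hlo Hhi] Hrange HirrS [B1 [B2 B3]]]]]] :=
  piece_val Hle Hirr (p := lb + l) ltac:(lia) ltac:(lia) Ha.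
exists (sort leq S); split.
- by rewrite ltn_sorted_uniq_leq sort_uniq HU (sort_sorted leq_total).
- by rewrite size_sort.
- by move=> x; rewrite mem_sort => /Hrange; lia.
- apply: irrV_cross; first by rewrite ltn_sorted_uniq_leq sort_uniq HU (sort_sorted leq_total).
  by apply: (irrV_eq _ HirrS) => z; rewrite mem_sort.
Qed.



Lemma crossP_catl E P Q p : crossP E P p -> crossP E (P ++ Q) p.
Proof.
move=> [i [j [Hi Hj HjP HE]]]; exists i, j; split => //.
  by rewrite size_cat; apply: leq_trans HjP _; apply: leq_addr.
by rewrite !nth_cat HjP (leq_ltn_trans _ HjP) //; apply: ltnW; apply: leq_trans Hj.
Qed.

Lemma crossP_catr E P Q p : crossP E Q p -> crossP E (P ++ Q) (size P + p).
Proof.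
move=> [i [j [Hi Hj HjP HE]]]; exists (size P + i), (size P + j); split.
- by rewrite ltn_add2l.
- by rewrite leq_add2l.
- by rewrite size_cat ltn_add2l.
- by rewrite !nth_cat !ltnNge !leq_addr /= !addKn.
Qed.

Lemma crossP_cat_inv E P Q p :
  (forall x y, x \in P -> y \in Q -> ~~ E x y) -> size P <= p ->
  crossP E (P ++ Q) p -> crossP E Q (p - size P).
Proof.
move=> Hsep Hp [i [j [Hi Hj HjP HE]]].
have HjQ : ~~ (j < size P) by rewrite -leqNgt; apply: leq_trans Hj.
move: HE; rewrite !nth_cat (negbTE HjQ).
case: (ltnP i (size P)) => Hi' HE.
  have HjQ' : nth 0 Q (j - size P) \in Q.
    apply: mem_nth; move: HjP Hj Hp; rewrite size_cat.
    move: (size P) (size Q) => sP sQ; lia.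
  by move/negP: (Hsep _ _ (mem_nth 0 Hi') HjQ').
exists (i - size P), (j - size P); move: HjP Hj Hp Hi Hi' HE; rewrite size_cat.
move: (size P) (size Q) => sP sQ *; split => //; lia.
Qed.

Lemma crossP0 E Q : ~ crossP E Q 0.
Proof. by move=> [i [j [Hi _ _ _]]]. Qed.

Lemma Sq_exists (E : rel nat) l k a0 M :
  (forall x y, E x y -> x < y -> y - x < l) ->
  (forall u, u.+1 < M -> exists i j, [/\ i <= u, u < j, j < M & E (a0 + i) (a0 + j)]) ->
  4 * k * l <= M ->
  forall c t0, all (fun a => 0 < a <= l) c -> t0 + size c <= k ->
  exists Sq, [/\ sorted ltn Sq, size Sq = sumn c,
    (forall x, x \in Sq -> a0 + 4 * l * t0 < x /\ x < a0 + 4 * l * (t0 + size c)) &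
    (forall p, 0 < p < sumn c -> (crossP E Sq p <-> p \notin pref c))].
Proof.
move=> Hle Hirr HM; elim=> [|a c IH] t0.
  by move=> _ _; exists [::]; split => // p /=; rewrite ltn0 andbF.
move=> /= /andP [Ha Hc] Hk.
have Hlk : l * t0.+1 <= l * k by apply: leq_mul => //; lia.
have [P [HPs HPsz HPb HPirr]] := piece Hle Hirr (lb := a0 + 4 * l * t0) (leq_addr _ _)
                                   ltac:(lia) Ha.
have [Q [HQs HQsz HQb HQc]] := IH t0.+1 Hc ltac:(lia).
have Hsep : forall x y, x \in P -> y \in Q -> x + l < y.
  by move=> x y /HPb Hx /HQb Hy; lia.
have Hsep' : forall x y, x \in P -> y \in Q -> ~~ E x y.
  move=> x y Hx Hy; apply/negP => HE.
  have := Hsep _ _ Hx Hy; have := Hle _ _ HE; have := Hsep _ _ Hx Hy; lia.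
exists (P ++ Q); split.
- rewrite (sorted_pairwise ltn_trans) pairwise_cat -!(sorted_pairwise ltn_trans) HPs HQs.
  rewrite !andbT; apply/allrelP => x y Hx Hy; have := Hsep _ _ Hx Hy; lia.
- by rewrite size_cat HPsz HQsz.
- move=> x; rewrite mem_cat => /orP [/HPb | /HQb]; lia.
- move=> p Hp.
  have Hmem : (p \in pref (a :: c)) = (p == a) || ((a <= p) && (p - a \in pref c)).
    rewrite /= inE; congr orb; apply/mapP/idP.
      by move=> [y Hy ->]; rewrite leq_addr /= addKn.
    by move=> /andP [Hap Hy]; exists (p - a) => //; rewrite subnKC.
  case: (ltnP p a) => Hpa.
    rewrite Hmem.
    have -> : (p == a) = false by apply/eqP; lia.
    have -> : (a <= p) = false by apply/negbTE; rewrite -ltnNge.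
    rewrite /=.
    split=> // _; apply: crossP_catl; apply: HPirr; rewrite HPsz; lia.
  have [Epa|Npa] := eqVneq p a.
    rewrite Hmem Epa eqxx /=; split=> // H.
    have := crossP_cat_inv Hsep' (leqnn (size P)); rewrite HPsz => /(_ H).
    by rewrite subnn => /crossP0.
  rewrite Hmem (negbTE Npa) Hpa /= -(HQc (p - a)); last by move: Hp => /=; lia.
  split.
    by move/(crossP_cat_inv Hsep'); rewrite HPsz; apply; lia.
  by move/(crossP_catr P); rewrite HPsz subnKC.
Qed.



Lemma sort_set N (Sq : seq nat) : sorted ltn Sq -> (forall x, x \in Sq -> x < N) ->
  sort leq [seq val x | x <- enum [set x : 'I_N | val x \in Sq]] = Sq.
Proof.
move=> Hs HN; apply: (irr_sorted_eq ltn_trans ltnn) => //.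
  rewrite ltn_sorted_uniq_leq sort_uniq (sort_sorted leq_total) andbT.
  by rewrite map_inj_uniq ?enum_uniq //; apply: val_inj.
move=> z; rewrite mem_sort; apply/mapP/idP.
  by move=> [o]; rewrite mem_enum inE => Ho ->.
move=> Hz; exists (Ordinal (HN _ Hz)) => //.
by rewrite mem_enum inE.
Qed.

Lemma card_set N (Sq : seq nat) : sorted ltn Sq -> (forall x, x \in Sq -> x < N) ->
  #|[set x : 'I_N | val x \in Sq]| = size Sq.
Proof.
move=> Hs HN; rewrite -{2}(sort_set Hs HN) size_sort size_map.
by rewrite cardE.
Qed.

Definition crossb n (g : {ffun 'I_n * 'I_n -> bool}) (p : nat) : bool :=
  [exists i : 'I_n, exists j : 'I_n, (i < p <= j) && g (i, j)].

Lemma crossb_ffun E n (Sq : seq nat) p : size Sq = n ->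
  crossb [ffun q : 'I_n * 'I_n => E (nth 0 Sq q.1) (nth 0 Sq q.2)] p <-> crossP E Sq p.
Proof.
move=> Hn; split.
  move=> /existsP [i /existsP [j /andP [/andP [Hi Hj] HE]]].
  rewrite ffunE /= in HE.
  by exists i, j; split => //; rewrite Hn.
move=> [i [j [Hi Hj HjS HE]]].
have Hj' : j < n by rewrite -Hn.
have Hi' : i < n by apply: leq_ltn_trans Hj'; apply: ltnW; apply: leq_trans Hj.
apply/existsP; exists (Ordinal Hi'); apply/existsP; exists (Ordinal Hj').
by rewrite ffunE /= Hi Hj.
Qed.

Definition dec n (g : {ffun 'I_n * 'I_n -> bool}) : seq nat :=
  [seq p <- iota 0 n.+1 | ((0 < p < n) && ~~ crossb g p) || ((p == n) && (0 < n))].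

Lemma key (E : rel nat) l k a0 M N n c :
  (forall x y, E x y -> x < y -> y - x < l) ->
  (forall u, u.+1 < M -> exists i j, [/\ i <= u, u < j, j < M & E (a0 + i) (a0 + j)]) ->
  4 * k * l <= M -> a0 + M <= N -> n <= k -> c \in comps l n ->
  exists2 g, g \in [set induced E n A | A : {set 'I_N} & #|A| == n] & dec g = pref c.
Proof.
move=> Hle Hirr HM HN Hn Hc.
have [Hsum Hall] : sumn c + 0 = n /\ all (fun a => 0 < a <= l) c.
  by apply: (CS_prop (l := l)); rewrite nth0.
rewrite addn0 in Hsum.
have Hsz : size c <= sumn c.
  elim: (c) Hall => //= a c' IH /andP [Ha Hc']; have := IH Hc'; lia.
have Hkl : l * size c <= l * k by apply: leq_mul => //; lia.
have Hsk : 0 + size c <= k by rewrite add0n (leq_trans Hsz) // Hsum.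
have [Sq [HSs HSsz HSb HSc]] := Sq_exists Hle Hirr HM Hall Hsk.
have HSN : forall x, x \in Sq -> x < N.
  move=> x /HSb; move: Hkl; move: (size c) => sc Hkl [_ H].
  have : 4 * (l * sc) <= 4 * (k * l) by rewrite leq_mul2l (mulnC k) Hkl orbT.
  rewrite (mulnA 4 k l) => H2; lia.
set A := [set x : 'I_N | val x \in Sq].
have Hind : induced E n A = [ffun q : 'I_n * 'I_n => E (nth 0 Sq q.1) (nth 0 Sq q.2)].
  by rewrite /induced /A sort_set.
exists (induced E n A).
  apply/imsetP; exists A => //.
  by rewrite inE /A card_set // HSsz Hsum.
have Hpos : all (fun a => 0 < a) c.
  by apply: sub_all Hall => a /andP [].
apply: (irr_sorted_eq ltn_trans ltnn).
- by apply: sorted_filter; [apply: ltn_trans | apply: iota_ltn_sorted].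
- exact: pref_sorted.
move=> z; rewrite mem_filter mem_iota add0n.
case: (boolP (0 < z < n)) => Hz /=.
  have Hsn : size Sq = n by rewrite HSsz.
  have Hcr : crossb (induced E n A) z <-> z \notin pref c.
    by rewrite Hind crossb_ffun // HSc // Hsum.
  case: (boolP (z \in pref c)) => Hzp.
    have -> : crossb (induced E n A) z = false.
      by apply/negbTE/negP => /Hcr; rewrite Hzp.
    by rewrite /= ltnW ?ltnS //; case/andP: Hz.
  have -> : crossb (induced E n A) z by apply/Hcr.
  by case/andP: Hz => _ Hzn; rewrite /= (ltn_eqF Hzn).
case: (boolP ((z == n) && (0 < n))) => Hzn /=.
  case/andP: Hzn => /eqP -> Hn0; rewrite leqnn -{1}Hsum; symmetry; apply: pref_last.
  by case: (c) Hsum Hn0 => //= <-.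
symmetry; apply/negP => /(pref_mem Hpos); rewrite Hsum => Hz'.
case/andP: Hz' => Hz1 Hz2.
have [Hlt|Heq] : z < n \/ z = n by lia.
  by move: Hz; rewrite Hz1 Hlt.
by move: Hzn; rewrite Heq eqxx -Heq Hz1.
Qed.

Theorem lemma16 (k l N : nat) (E : rel nat) :
  ordered_graph N E -> l_empty l E ->
  (exists ns, irr_block_decomp N E ns /\ has (fun m => 4 * k * l <= m) ns) ->
  forall n, n <= k -> F n l <= S_n n N E.
Proof.
move=> _ Hle [ns [[Hpos Hsum Hedges Hblocks] Hhas]] n Hn.
have [t Ht HtM] := has_nthP 0 Hhas.
set a0 := block_start ns t; set M := nth 0 ns t.
have HaM : a0 + M <= N.
  rewrite -Hsum /a0 /M /block_start -sumn_rcons -take_nth //.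
  by rewrite -{2}(cat_take_drop t.+1 ns) sumn_cat leq_addr.
have Hirr : forall u, u.+1 < M -> exists i j, [/\ i <= u, u < j, j < M & E (a0 + i) (a0 + j)].
  move=> u Hu; apply: NNPP => Hno; apply: (Hblocks t Ht).
  exists u, u.+1; split => // i j Hij /and3P [HiM HjM HE].
  case: (leqP j u) => //= Hju; case: (leqP u.+1 i) => // Hiu.
  by exfalso; apply: Hno; exists i, j; split.
move: HtM; rewrite -/M => HM.
clearbody a0 M.
rewrite F_comps /S_n.
have Huniq : uniq (map pref (comps l n)).
  by rewrite map_inj_uniq ?(CS_uniq l n 0) //; apply: pref_inj.
rewrite -(size_map pref) cardE -(size_map (@dec n)).
apply: uniq_leq_size Huniq _ => z /mapP [c Hc ->].
have [g Hg Hdec] := key Hle Hirr HM HaM Hn Hc.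
by rewrite -Hdec; apply: map_f; rewrite mem_enum.
Qed.
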